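(* Let $(A,\cdot,\alpha)$ be a Hom-Malcev algebra over a field $\mathbb{K}$ of characteristic $0$, and define for $w,x,y,z\in A$ $$G(w,x,y,z)=J_{\alpha}(w\cdot x,\alpha(y),\alpha(z))-\alpha^{2}(x)\cdot J_{\alpha}(w,y,z)-J_{\alpha}(x,y,z)\cdot\alpha^{2}(w).$$ Then for all $w,x,y,z\in A$: (1) $J_{\alpha}(w\cdot x,\alpha(y),\alpha(z))+J_{\alpha}(x\cdot y,\alpha(z),\alpha(w))+J_{\alpha}(y\cdot z,\alpha(w),\alpha(x))+J_{\alpha}(z\cdot w,\alpha(x),\alpha(y))=0$; (2) $2G(w,x,y,z)-\alpha^{2}(w)\cdot J_{\alpha}(x,y,z)+\alpha^{2}(x)\cdot J_{\alpha}(w,y,z)-\alpha^{2}(y)\cdot J_{\alpha}(z,w,x)+\alpha^{2}(z)\cdot J_{\alpha}(w,x,y)=J_{\alpha}(w\cdot x,\alpha(y),\alpha(z))+J_{\alpha}(y\cdot z,\alpha(w),\alpha(x))$.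
   Context: A multiplicative Hom-algebra is a triple $(A,\cdot,\alpha)$ with $A$ a vector space over $\mathbb{K}$, $\cdot$ bilinear, and $\alpha$ linear with $\alpha(x\cdot y)=\alpha(x)\cdot\alpha(y)$; anticommutative means $x\cdot y=-y\cdot x$. The Hom-Jacobian is $J_{\alpha}(x,y,z)=(x\cdot y)\cdot\alpha(z)+(y\cdot z)\cdot\alpha(x)+(z\cdot x)\cdot\alpha(y)$. A Hom-Malcev algebra is an anticommutative multiplicative Hom-algebra satisfying $J_{\alpha}(\alpha(x),\alpha(y),x\cdot z)=J_{\alpha}(x,y,z)\cdot\alpha^{2}(x)$ for all $x,y,z\in A$. *)

(* Defs.v *)
From mathcomp Require Import all_boot all_algebra.
Set Implicit Arguments. Unset Strict Implicit. Unset Printing Implicit Defensive.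
Import GRing.Theory.
Local Open Scope ring_scope.

Definition bilinear_prod (F : fieldType) (V : lmodType F) (mul : V -> V -> V) :=
  (forall (a : F) (x y z : V), mul (a *: x + y) z = a *: mul x z + mul y z) /\
  (forall (a : F) (x y z : V), mul x (a *: y + z) = a *: mul x y + mul x z).

Definition multiplicative (V : Type) (mul : V -> V -> V) (alpha : V -> V) :=
  forall x y, alpha (mul x y) = mul (alpha x) (alpha y).

Definition anticommutative (V : zmodType) (mul : V -> V -> V) :=
  forall x y, mul x y = - mul y x.

Definition homJ (V : zmodType) (mul : V -> V -> V) (alpha : V -> V) (x y z : V) :=
  mul (mul x y) (alpha z) + mul (mul y z) (alpha x) + mul (mul z x) (alpha y).

Definition hom_malcev (F : fieldType) (V : lmodType F)
  (mul : V -> V -> V) (alpha : {linear V -> V}) :=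
  [/\ bilinear_prod mul, multiplicative mul alpha, anticommutative mul &
      forall x y z : V,
        homJ mul alpha (alpha x) (alpha y) (mul x z) =
        mul (homJ mul alpha x y z) (alpha (alpha x))].

Definition homG (V : zmodType) (mul : V -> V -> V) (alpha : V -> V) (w x y z : V) :=
  homJ mul alpha (mul w x) (alpha y) (alpha z)
  - mul (alpha (alpha x)) (homJ mul alpha w y z)
  - mul (homJ mul alpha x y z) (alpha (alpha w)).

(* Main.v *)
Require Import Defs.
From mathcomp Require Import all_boot all_algebra.
Import GRing.Theory.
Local Open Scope ring_scope.

Section Refl.
Variable V : zmodType.

Inductive ex := At of nat | Add of ex & ex | Opp of ex | Mz of int & ex.

Fixpoint eval (env : seq V) (e : ex) : V :=
  match e with
  | At n => nth 0 env n
  | Add a b => eval env a + eval env b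
  | Opp a => - eval env a
  | Mz c a => eval env a *~ c
  end.

Fixpoint coef (e : ex) (i : nat) : int :=
  match e with
  | At n => if n == i then 1 else 0
  | Add a b => coef a i + coef b i
  | Opp a => - coef a i
  | Mz c a => c * coef a i
  end.

Lemma eval_coef env e : eval env e = \sum_(i < size env) env`_i *~ coef e i.
Proof.
elim: e => [n|a IHa b IHb|a IHa|c a IHa] /=.
- case: (ltnP n (size env)) => h.
    rewrite (bigD1 (Ordinal h)) //= eqxx mulr1z big1 ?addr0 // => j /negbTE hj.
    have -> : (n == j) = false.
      apply/negP => /eqP e; move/negP: hj; apply; apply/eqP/val_inj; by rewrite /= e.
    by rewrite mulr0z.
  rewrite nth_default // big1 // => j _.
  have -> : (n == j) = false by apply/negbTE; rewrite neq_ltn (leq_trans (ltn_ord j) h) orbT.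
  by rewrite mulr0z.
- by rewrite IHa IHb -big_split /=; apply: eq_bigr => i _; rewrite mulrzDr.
- by rewrite IHa -sumrN; apply: eq_bigr => i _; rewrite mulrNz.
- rewrite IHa mulrz_suml; apply: eq_bigr => i _; by rewrite mulrzA_C.
Qed.

Lemma eq_coef env e1 e2 :
  all (fun i => coef e1 i == coef e2 i) (iota 0 (size env)) ->
  eval env e1 = eval env e2.
Proof.
move/allP=> h; rewrite !eval_coef; apply: eq_bigr => i _.
have /eqP -> // : coef e1 i == coef e2 i.
by apply: h; rewrite mem_iota /= add0n ltn_ord.
Qed.

Fixpoint holds (env : seq V) (hs : seq (ex * ex)) : Prop :=
  match hs with
  | [::] => True
  | h :: hs' => eval env h.1 = eval env h.2 /\ holds env hs'
  end.

Fixpoint comb (cs : seq int) (hs : seq (ex * ex)) : ex :=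
  match cs, hs with
  | c :: cs', h :: hs' => Add (Mz c (Add h.1 (Opp h.2))) (comb cs' hs')
  | _, _ => Mz 0 (At 0)
  end.

Lemma comb0 env cs hs : holds env hs -> eval env (comb cs hs) = 0.
Proof.
elim: hs cs => [|h hs IH] [|c cs] /=; rewrite ?mulr0z //.
by case=> -> /IH ->; rewrite subrr mul0rz add0r.
Qed.

Lemma certify env e cs hs : holds env hs ->
  all (fun i => coef e i == coef (comb cs hs) i) (iota 0 (size env)) ->
  eval env e = 0.
Proof. by move=> H /eq_coef ->; apply: comb0. Qed.

End Refl.

Ltac inlist x l :=
  match l with
  | ?y :: ?l' => first [ unify x y | inlist x l' ]
  end.

Ltac lookup x l :=
  match l with
  | ?y :: ?l' => match goal with
                 | _ => let _ := match goal with _ => unify x y end in constr:(0%N)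
                 | _ => let n := lookup x l' in constr:(n.+1)
                 end
  end.

Ltac atoms t acc :=
  match t with
  | ?a + ?b => let acc1 := atoms a acc in atoms b acc1
  | - ?a => atoms a acc
  | ?a *~ _ => atoms a acc
  | ?a *+ _ => atoms a acc
  | _ => match acc with
         | _ => let _ := match goal with _ => inlist t acc end in acc
         | _ => constr:(t :: acc)
         end
  end.

Ltac reify l t :=
  match t with
  | ?a + ?b => let ra := reify l a in let rb := reify l b in constr:(Add ra rb)
  | - ?a => let ra := reify l a in constr:(Opp ra)
  | ?a *~ ?c => let ra := reify l a in constr:(Mz c ra)
  | ?a *+ ?n => let ra := reify l a in constr:(Mz (Posz n) ra)
  | _ => let n := lookup t l in constr:(At n)
  end.

Ltac zmodeq :=
  match goal with
  | |- @eq ?V ?L ?R =>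
    let l0 := atoms L (@nil V) in
    let l := atoms R l0 in
    let rl := reify l L in
    let rr := reify l R in
    refine (@eq_coef _ l rl rr _); vm_compute; reflexivity
  end.

Lemma test (V : zmodType) (a b c : V) : a + (b - c) + c = b + a.
Proof. zmodeq. Qed.

Lemma zeq (V : zmodType) (a b c d : V) : a - b = c - d -> c = d -> a = b.
Proof. by move=> e cd; apply/eqP; rewrite -subr_eq0 e cd subrr. Qed.

Lemma zeq3 (V : zmodType) (a b c d e f g k : V) : c = d -> e = f -> g = k ->
  a - b = (c - d) - (e - f) - (g - k) -> a = b.
Proof. by move=> -> -> -> e'; apply/eqP; rewrite -subr_eq0 e' !subrr ?subr0 ?subrr. Qed.

Section Alg.
Context (F : fieldType) (V : lmodType F) (mul : V -> V -> V) (alpha : {linear V -> V}).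

Lemma mulDl' : bilinear_prod mul -> forall x y z, mul (x + y) z = mul x z + mul y z.
Proof. by case=> h _ x y z; have := h 1 x y z; rewrite !scale1r. Qed.
Lemma mulDr' : bilinear_prod mul -> forall x y z, mul x (y + z) = mul x y + mul x z.
Proof. by case=> _ h x y z; have := h 1 x y z; rewrite !scale1r. Qed.
Lemma mul0l' : bilinear_prod mul -> forall z, mul 0 z = 0.
Proof. move=> hb z; have h := mulDl' hb 0 0 z; rewrite addr0 in h.
by apply: (addrI (mul 0 z)); rewrite addr0 -h. Qed.
Lemma mul0r' : bilinear_prod mul -> forall z, mul z 0 = 0.
Proof. move=> hb z; have h := mulDr' hb z 0 0; rewrite addr0 in h.
by apply: (addrI (mul z 0)); rewrite addr0 -h. Qed.
Lemma mulNl' : bilinear_prod mul -> forall x z, mul (- x) z = - mul x z.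
Proof. by move=> hb x z; apply/eqP; rewrite -addr_eq0 -mulDl' // addNr mul0l'. Qed.
Lemma mulNr' : bilinear_prod mul -> forall x z, mul z (- x) = - mul z x.
Proof. by move=> hb x z; apply/eqP; rewrite -addr_eq0 -mulDr' // addNr mul0r'. Qed.

Lemma JD1 : bilinear_prod mul -> forall a b c d,
  homJ mul alpha (a + b) c d = homJ mul alpha a c d + homJ mul alpha b c d.
Proof. move=> hb a b c d; rewrite /homJ raddfD !(mulDl' hb, mulDr' hb). Show. zmodeq. Qed.
Lemma JD3 : bilinear_prod mul -> forall a b c d,
  homJ mul alpha a b (c + d) = homJ mul alpha a b c + homJ mul alpha a b d.
Proof. move=> hb a b c d; rewrite /homJ raddfD !(mulDl' hb, mulDr' hb). Show. zmodeq. Qed.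

Lemma HL : hom_malcev mul alpha -> forall w x y z,
  homJ mul alpha (alpha w) (alpha y) (mul x z) + homJ mul alpha (alpha x) (alpha y) (mul w z)
  = mul (homJ mul alpha w y z) (alpha (alpha x)) + mul (homJ mul alpha x y z) (alpha (alpha w)).
Proof.
case=> hb hm ha hM w x y z.
have h := hM (w + x) y z; have h1 := hM w y z; have h2 := hM x y z.
rewrite /homJ !(raddfD, mulDl' hb, mulDr' hb) in h h1 h2 *.
apply: (@zeq3 _ _ _ _ _ _ _ _ _ h h1 h2); zmodeq.
Qed.
End Alg.
Theorem lemma2p6 (F : fieldType) (V : lmodType F)
  (mul : V -> V -> V) (alpha : {linear V -> V}) :
  [pchar F] =i pred0 ->
  hom_malcev mul alpha ->
  forall w x y z : V,
    let J := homJ mul alpha in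
    let a2 := fun v => alpha (alpha v) in
    J (mul w x) (alpha y) (alpha z) + J (mul x y) (alpha z) (alpha w)
      + J (mul y z) (alpha w) (alpha x) + J (mul z w) (alpha x) (alpha y) = 0
    /\
    homG mul alpha w x y z *+ 2 - mul (a2 w) (J x y z) + mul (a2 x) (J w y z)
      - mul (a2 y) (J z w x) + mul (a2 z) (J w x y)
    = J (mul w x) (alpha y) (alpha z) + J (mul y z) (alpha w) (alpha x).
Proof.
move=> _ hmal w x y z J a2.
have HL0 := @HL _ _ _ _ hmal.
case: hmal => hb hm ha _.
split.
have hh0 := HL0 w y x z.
have hh1 := HL0 w y z x.
have hh2 : (mul (homJ mul alpha w x z) (alpha (alpha y))) = (((mul (mul (mul w x) (alpha z)) (alpha (alpha y))) + (mul (mul (mul x z) (alpha w)) (alpha (alpha y)))) + (mul (mul (mul z w) (alpha x)) (alpha (alpha y)))).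
  by rewrite /homJ !(@mulDl' _ _ _ hb).
have hh3 : (mul (homJ mul alpha y x z) (alpha (alpha w))) = (((mul (mul (mul y x) (alpha z)) (alpha (alpha w))) + (mul (mul (mul x z) (alpha y)) (alpha (alpha w)))) + (mul (mul (mul z y) (alpha x)) (alpha (alpha w)))).
  by rewrite /homJ !(@mulDl' _ _ _ hb).
have hh4 : (mul (homJ mul alpha w z x) (alpha (alpha y))) = (((mul (mul (mul w z) (alpha x)) (alpha (alpha y))) + (mul (mul (mul z x) (alpha w)) (alpha (alpha y)))) + (mul (mul (mul x w) (alpha z)) (alpha (alpha y)))).
  by rewrite /homJ !(@mulDl' _ _ _ hb).
have hh5 : (mul (homJ mul alpha y z x) (alpha (alpha w))) = (((mul (mul (mul y z) (alpha x)) (alpha (alpha w))) + (mul (mul (mul z x) (alpha y)) (alpha (alpha w)))) + (mul (mul (mul x y) (alpha z)) (alpha (alpha w)))).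
  by rewrite /homJ !(@mulDl' _ _ _ hb).
have hh6 : (mul (mul (alpha z) (alpha w)) (alpha (mul x y))) = (- (mul (mul (alpha w) (alpha z)) (mul (alpha x) (alpha y)))).
  rewrite ?hm. rewrite (ha (alpha z) (alpha w)) ?(@mulNl' _ _ _ hb) ?(@mulNr' _ _ _ hb) ?opprK. by [].
have hh7 : (mul (mul (alpha w) (mul x y)) (alpha (alpha z))) = (- (mul (mul (mul x y) (alpha w)) (alpha (alpha z)))).
  rewrite ?hm. rewrite (ha (alpha w) (mul x y)) ?(@mulNl' _ _ _ hb) ?(@mulNr' _ _ _ hb) ?opprK. by [].
have hh8 : (mul (mul (mul z w) (alpha x)) (alpha (alpha y))) = (- (mul (mul (mul w z) (alpha x)) (alpha (alpha y)))).
  rewrite ?hm. rewrite (ha z w) ?(@mulNl' _ _ _ hb) ?(@mulNr' _ _ _ hb) ?opprK. by [].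
have hh9 : (mul (mul (alpha x) (alpha y)) (alpha (mul z w))) = (mul (mul (alpha w) (alpha z)) (mul (alpha x) (alpha y))).
  rewrite ?hm. rewrite (ha (alpha z) (alpha w)) ?(@mulNl' _ _ _ hb) ?(@mulNr' _ _ _ hb) ?opprK. rewrite (ha (mul (alpha x) (alpha y)) (mul (alpha w) (alpha z))) ?(@mulNl' _ _ _ hb) ?(@mulNr' _ _ _ hb) ?opprK. by [].
have hh10 : (mul (mul (alpha y) (mul z w)) (alpha (alpha x))) = (mul (mul (mul w z) (alpha y)) (alpha (alpha x))).
  rewrite ?hm. rewrite (ha z w) ?(@mulNl' _ _ _ hb) ?(@mulNr' _ _ _ hb) ?opprK. rewrite (ha (alpha y) (mul w z)) ?(@mulNl' _ _ _ hb) ?(@mulNr' _ _ _ hb) ?opprK. by [].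
have hh11 : (mul (mul (alpha y) (alpha x)) (alpha (mul w z))) = (mul (mul (alpha w) (alpha z)) (mul (alpha x) (alpha y))).
  rewrite ?hm. rewrite (ha (alpha y) (alpha x)) ?(@mulNl' _ _ _ hb) ?(@mulNr' _ _ _ hb) ?opprK. rewrite (ha (mul (alpha x) (alpha y)) (mul (alpha w) (alpha z))) ?(@mulNl' _ _ _ hb) ?(@mulNr' _ _ _ hb) ?opprK. by [].
have hh12 : (mul (mul (alpha x) (mul w z)) (alpha (alpha y))) = (- (mul (mul (mul w z) (alpha x)) (alpha (alpha y)))).
  rewrite ?hm. rewrite (ha (alpha x) (mul w z)) ?(@mulNl' _ _ _ hb) ?(@mulNr' _ _ _ hb) ?opprK. by [].
have hh13 : (mul (mul (alpha w) (alpha z)) (alpha (mul y x))) = (- (mul (mul (alpha w) (alpha z)) (mul (alpha x) (alpha y)))).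
  rewrite ?hm. rewrite (ha (alpha y) (alpha x)) ?(@mulNl' _ _ _ hb) ?(@mulNr' _ _ _ hb) ?opprK. by [].
have hh14 : (mul (mul (alpha z) (mul y x)) (alpha (alpha w))) = (mul (mul (mul x y) (alpha z)) (alpha (alpha w))).
  rewrite ?hm. rewrite (ha y x) ?(@mulNl' _ _ _ hb) ?(@mulNr' _ _ _ hb) ?opprK. rewrite (ha (alpha z) (mul x y)) ?(@mulNl' _ _ _ hb) ?(@mulNr' _ _ _ hb) ?opprK. by [].
have hh15 : (mul (mul (mul y x) (alpha w)) (alpha (alpha z))) = (- (mul (mul (mul x y) (alpha w)) (alpha (alpha z)))).
  rewrite ?hm. rewrite (ha y x) ?(@mulNl' _ _ _ hb) ?(@mulNr' _ _ _ hb) ?opprK. by [].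
have hh16 : (mul (mul (mul z x) (alpha w)) (alpha (alpha y))) = (- (mul (mul (mul x z) (alpha w)) (alpha (alpha y)))).
  rewrite ?hm. rewrite (ha z x) ?(@mulNl' _ _ _ hb) ?(@mulNr' _ _ _ hb) ?opprK. by [].
have hh17 : (mul (mul (mul z y) (alpha x)) (alpha (alpha w))) = (- (mul (mul (mul y z) (alpha x)) (alpha (alpha w)))).
  rewrite ?hm. rewrite (ha z y) ?(@mulNl' _ _ _ hb) ?(@mulNr' _ _ _ hb) ?opprK. by [].
have hh18 : (mul (mul (mul x w) (alpha z)) (alpha (alpha y))) = (- (mul (mul (mul w x) (alpha z)) (alpha (alpha y)))).
  rewrite ?hm. rewrite (ha x w) ?(@mulNl' _ _ _ hb) ?(@mulNr' _ _ _ hb) ?opprK. by [].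
have hh19 : (mul (mul (mul z x) (alpha y)) (alpha (alpha w))) = (- (mul (mul (mul x z) (alpha y)) (alpha (alpha w)))).
  rewrite ?hm. rewrite (ha z x) ?(@mulNl' _ _ _ hb) ?(@mulNr' _ _ _ hb) ?opprK. by [].
have hh20 : (mul (mul (mul y x) (alpha z)) (alpha (alpha w))) = (- (mul (mul (mul x y) (alpha z)) (alpha (alpha w)))).
  rewrite ?hm. rewrite (ha y x) ?(@mulNl' _ _ _ hb) ?(@mulNr' _ _ _ hb) ?opprK. by [].
refine (@certify _ [:: (mul (mul (mul w x) (alpha y)) (alpha (alpha z))); (mul (mul (alpha y) (alpha z)) (alpha (mul w x))); (mul (mul (alpha z) (mul w x)) (alpha (alpha y))); (mul (mul (mul x y) (alpha z)) (alpha (alpha w))); (mul (mul (alpha z) (alpha w)) (alpha (mul x y))); (mul (mul (alpha w) (mul x y)) (alpha (alpha z))); (mul (mul (mul y z) (alpha w)) (alpha (alpha x))); (mul (mul (alpha w) (alpha x)) (alpha (mul y z))); (mul (mul (alpha x) (mul y z)) (alpha (alpha w))); (mul (mul (mul z w) (alpha x)) (alpha (alpha y))); (mul (mul (alpha x) (alpha y)) (alpha (mul z w))); (mul (mul (alpha y) (mul z w)) (alpha (alpha x))); (mul (mul (alpha y) (alpha x)) (alpha (mul w z))); (mul (mul (alpha x) (mul w z)) (alpha (alpha y))); (mul (mul (mul w z) (alpha y)) (alpha (alpha x))); (mul (homJ mul alpha w x z) (alpha (alpha y))); (mul (homJ mul alpha y x z) (alpha (alpha w))); (mul (mul (alpha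 w) (alpha z)) (alpha (mul y x))); (mul (mul (alpha z) (mul y x)) (alpha (alpha w))); (mul (mul (mul y x) (alpha w)) (alpha (alpha z))); (mul (homJ mul alpha w z x) (alpha (alpha y))); (mul (homJ mul alpha y z x) (alpha (alpha w))); (mul (mul (mul w x) (alpha z)) (alpha (alpha y))); (mul (mul (mul x z) (alpha w)) (alpha (alpha y))); (mul (mul (mul y x) (alpha z)) (alpha (alpha w))); (mul (mul (mul x z) (alpha y)) (alpha (alpha w))); (mul (mul (mul z y) (alpha x)) (alpha (alpha w))); (mul (mul (mul w z) (alpha x)) (alpha (alpha y))); (mul (mul (mul z x) (alpha w)) (alpha (alpha y))); (mul (mul (mul x w) (alpha z)) (alpha (alpha y))); (mul (mul (mul y z) (alpha x)) (alpha (alpha w))); (mul (mul (mul z x) (alpha y)) (alpha (alpha w))); (mul (mul (alpha w) (alpha z)) (mul (alpha x) (alpha y))); (mul (mul (mul x y) (alpha w)) (alpha (alpha z)))] (Add (Add (Add (Add (Add (At 0) (At 1)) (At 2)) (Add (Add (At 3) (At 4)) (At 5))) (Add (Add (At 6) (At 7)) (At 8))) (Add (Add (At 9) (At 10)) (At 11))) [:: (Posz 1); (Posz 1); (Posz 1); (Posz 1); (Posz 1); (Posz 1); (Posz 1); (Posz 1); (Posz 2); (Posz 1); (Posz 1); (Negz 0); (Negz 0); (Negz 0); (Negz 0); (Negz 0); (Posz 1); (Posz 1); (Posz 1); (Posz 1); (Posz 1)] [:: ((Add (Add (Add (At 7) (At 8)) (At 6)) (Add (Add (At 12) (At 13)) (At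 14))), (Add (At 15) (At 16))); ((Add (Add (Add (At 17) (At 18)) (At 19)) (Add (Add (At 1) (At 2)) (At 0))), (Add (At 20) (At 21))); ((At 15), (Add (Add (At 22) (At 23)) (At 9))); ((At 16), (Add (Add (At 24) (At 25)) (At 26))); ((At 20), (Add (Add (At 27) (At 28)) (At 29))); ((At 21), (Add (Add (At 30) (At 31)) (At 3))); ((At 4), (Opp (At 32))); ((At 5), (Opp (At 33))); ((At 9), (Opp (At 27))); ((At 10), (At 32)); ((At 11), (At 14)); ((At 12), (At 32)); ((At 13), (Opp (At 27))); ((At 17), (Opp (At 32))); ((At 18), (At 3)); ((At 19), (Opp (At 33))); ((At 28), (Opp (At 23))); ((At 26), (Opp (At 30))); ((At 29), (Opp (At 22))); ((At 31), (Opp (At 25))); ((At 24), (Opp (At 3)))] (conj hh0 (conj hh1 (conj hh2 (conj hh3 (conj hh4 (conj hh5 (conj hh6 (conj hh7 (conj hh8 (conj hh9 (conj hh10 (conj hh11 (conj hh12 (conj hh13 (conj hh14 (conj hh15 (conj hh16 (conj hh17 (conj hh18 (conj hh19 (conj hh20 I))))))))))))))))))))) _).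
vm_compute; reflexivity.
apply/eqP; rewrite -subr_eq0; apply/eqP.
have hh0 := HL0 w x z y.
have hh1 := HL0 w y z x.
have hh2 := HL0 w z x y.
have hh3 : (mul (alpha (alpha x)) (homJ mul alpha w y z)) = (((mul (alpha (alpha x)) (mul (mul w y) (alpha z))) + (mul (alpha (alpha x)) (mul (mul y z) (alpha w)))) + (mul (alpha (alpha x)) (mul (mul z w) (alpha y)))).
  by rewrite /homJ !(@mulDr' _ _ _ hb).
have hh4 : (mul (homJ mul alpha x y z) (alpha (alpha w))) = (((mul (mul (mul x y) (alpha z)) (alpha (alpha w))) + (mul (mul (mul y z) (alpha x)) (alpha (alpha w)))) + (mul (mul (mul z x) (alpha y)) (alpha (alpha w)))).
  by rewrite /homJ !(@mulDl' _ _ _ hb).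
have hh5 : (mul (alpha (alpha w)) (homJ mul alpha x y z)) = (((mul (alpha (alpha w)) (mul (mul x y) (alpha z))) + (mul (alpha (alpha w)) (mul (mul y z) (alpha x)))) + (mul (alpha (alpha w)) (mul (mul z x) (alpha y)))).
  by rewrite /homJ !(@mulDr' _ _ _ hb).
have hh6 : (mul (alpha (alpha y)) (homJ mul alpha z w x)) = (((mul (alpha (alpha y)) (mul (mul z w) (alpha x))) + (mul (alpha (alpha y)) (mul (mul w x) (alpha z)))) + (mul (alpha (alpha y)) (mul (mul x z) (alpha w)))).
  by rewrite /homJ !(@mulDr' _ _ _ hb).
have hh7 : (mul (alpha (alpha z)) (homJ mul alpha w x y)) = (((mul (alpha (alpha z)) (mul (mul w x) (alpha y))) + (mul (alpha (alpha z)) (mul (mul x y) (alpha w)))) + (mul (alpha (alpha z)) (mul (mul y w) (alpha x)))).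
  by rewrite /homJ !(@mulDr' _ _ _ hb).
have hh8 : (mul (homJ mul alpha w z y) (alpha (alpha x))) = (((mul (mul (mul w z) (alpha y)) (alpha (alpha x))) + (mul (mul (mul z y) (alpha w)) (alpha (alpha x)))) + (mul (mul (mul y w) (alpha z)) (alpha (alpha x)))).
  by rewrite /homJ !(@mulDl' _ _ _ hb).
have hh9 : (mul (homJ mul alpha x z y) (alpha (alpha w))) = (((mul (mul (mul x z) (alpha y)) (alpha (alpha w))) + (mul (mul (mul z y) (alpha x)) (alpha (alpha w)))) + (mul (mul (mul y x) (alpha z)) (alpha (alpha w)))).
  by rewrite /homJ !(@mulDl' _ _ _ hb).
have hh10 : (mul (homJ mul alpha w z x) (alpha (alpha y))) = (((mul (mul (mul w z) (alpha x)) (alpha (alpha y))) + (mul (mul (mul z x) (alpha w)) (alpha (alpha y)))) + (mul (mul (mul x w) (alpha z)) (alpha (alpha y)))).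
  by rewrite /homJ !(@mulDl' _ _ _ hb).
have hh11 : (mul (homJ mul alpha y z x) (alpha (alpha w))) = (((mul (mul (mul y z) (alpha x)) (alpha (alpha w))) + (mul (mul (mul z x) (alpha y)) (alpha (alpha w)))) + (mul (mul (mul x y) (alpha z)) (alpha (alpha w)))).
  by rewrite /homJ !(@mulDl' _ _ _ hb).
have hh12 : (mul (homJ mul alpha w x y) (alpha (alpha z))) = (((mul (mul (mul w x) (alpha y)) (alpha (alpha z))) + (mul (mul (mul x y) (alpha w)) (alpha (alpha z)))) + (mul (mul (mul y w) (alpha x)) (alpha (alpha z)))).
  by rewrite /homJ !(@mulDl' _ _ _ hb).
have hh13 : (mul (homJ mul alpha z x y) (alpha (alpha w))) = (((mul (mul (mul z x) (alpha y)) (alpha (alpha w))) + (mul (mul (mul x y) (alpha z)) (alpha (alpha w)))) + (mul (mul (mul y z) (alpha x)) (alpha (alpha w)))).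
  by rewrite /homJ !(@mulDl' _ _ _ hb).
have hh14 : (mul (mul (alpha w) (alpha x)) (alpha (mul y z))) = (mul (mul (alpha w) (alpha x)) (mul (alpha y) (alpha z))).
  rewrite ?hm. by [].
have hh15 : (mul (mul (alpha x) (mul y z)) (alpha (alpha w))) = (- (mul (mul (mul y z) (alpha x)) (alpha (alpha w)))).
  rewrite ?hm. rewrite (ha (alpha x) (mul y z)) ?(@mulNl' _ _ _ hb) ?(@mulNr' _ _ _ hb) ?opprK. by [].
have hh16 : (mul (mul (alpha w) (alpha z)) (alpha (mul x y))) = (mul (mul (alpha w) (alpha z)) (mul (alpha x) (alpha y))).
  rewrite ?hm. by [].
have hh17 : (mul (mul (alpha z) (mul x y)) (alpha (alpha w))) = (- (mul (mul (mul x y) (alpha z)) (alpha (alpha w)))).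
  rewrite ?hm. rewrite (ha (alpha z) (mul x y)) ?(@mulNl' _ _ _ hb) ?(@mulNr' _ _ _ hb) ?opprK. by [].
have hh18 : (mul (mul (alpha x) (alpha z)) (alpha (mul w y))) = (- (mul (mul (alpha w) (alpha y)) (mul (alpha x) (alpha z)))).
  rewrite ?hm. rewrite (ha (mul (alpha x) (alpha z)) (mul (alpha w) (alpha y))) ?(@mulNl' _ _ _ hb) ?(@mulNr' _ _ _ hb) ?opprK. by [].
have hh19 : (mul (mul (alpha z) (mul w y)) (alpha (alpha x))) = (- (mul (mul (mul w y) (alpha z)) (alpha (alpha x)))).
  rewrite ?hm. rewrite (ha (alpha z) (mul w y)) ?(@mulNl' _ _ _ hb) ?(@mulNr' _ _ _ hb) ?opprK. by [].
have hh20 : (mul (mul (alpha w) (alpha z)) (alpha (mul y x))) = (- (mul (mul (alpha w) (alpha z)) (mul (alpha x) (alpha y)))).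
  rewrite ?hm. rewrite (ha (alpha y) (alpha x)) ?(@mulNl' _ _ _ hb) ?(@mulNr' _ _ _ hb) ?opprK. by [].
have hh21 : (mul (mul (alpha z) (mul y x)) (alpha (alpha w))) = (mul (mul (mul x y) (alpha z)) (alpha (alpha w))).
  rewrite ?hm. rewrite (ha y x) ?(@mulNl' _ _ _ hb) ?(@mulNr' _ _ _ hb) ?opprK. rewrite (ha (alpha z) (mul x y)) ?(@mulNl' _ _ _ hb) ?(@mulNr' _ _ _ hb) ?opprK. by [].
have hh22 : (mul (mul (mul y x) (alpha w)) (alpha (alpha z))) = (- (mul (mul (mul x y) (alpha w)) (alpha (alpha z)))).
  rewrite ?hm. rewrite (ha y x) ?(@mulNl' _ _ _ hb) ?(@mulNr' _ _ _ hb) ?opprK. by [].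
have hh23 : (mul (mul (alpha w) (alpha x)) (alpha (mul z y))) = (- (mul (mul (alpha w) (alpha x)) (mul (alpha y) (alpha z)))).
  rewrite ?hm. rewrite (ha (alpha z) (alpha y)) ?(@mulNl' _ _ _ hb) ?(@mulNr' _ _ _ hb) ?opprK. by [].
have hh24 : (mul (mul (alpha x) (mul z y)) (alpha (alpha w))) = (mul (mul (mul y z) (alpha x)) (alpha (alpha w))).
  rewrite ?hm. rewrite (ha z y) ?(@mulNl' _ _ _ hb) ?(@mulNr' _ _ _ hb) ?opprK. rewrite (ha (alpha x) (mul y z)) ?(@mulNl' _ _ _ hb) ?(@mulNr' _ _ _ hb) ?opprK. by [].
have hh25 : (mul (mul (alpha z) (alpha x)) (alpha (mul w y))) = (mul (mul (alpha w) (alpha y)) (mul (alpha x) (alpha z))).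
  rewrite ?hm. rewrite (ha (alpha z) (alpha x)) ?(@mulNl' _ _ _ hb) ?(@mulNr' _ _ _ hb) ?opprK. rewrite (ha (mul (alpha x) (alpha z)) (mul (alpha w) (alpha y))) ?(@mulNl' _ _ _ hb) ?(@mulNr' _ _ _ hb) ?opprK. by [].
have hh26 : (mul (mul (alpha x) (mul w y)) (alpha (alpha z))) = (- (mul (mul (mul w y) (alpha x)) (alpha (alpha z)))).
  rewrite ?hm. rewrite (ha (alpha x) (mul w y)) ?(@mulNl' _ _ _ hb) ?(@mulNr' _ _ _ hb) ?opprK. by [].
have hh27 : (mul (mul (mul z x) (alpha w)) (alpha (alpha y))) = (- (mul (mul (mul x z) (alpha w)) (alpha (alpha y)))).
  rewrite ?hm. rewrite (ha z x) ?(@mulNl' _ _ _ hb) ?(@mulNr' _ _ _ hb) ?opprK. by [].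
have hh28 : (mul (mul (mul y w) (alpha x)) (alpha (alpha z))) = (- (mul (mul (mul w y) (alpha x)) (alpha (alpha z)))).
  rewrite ?hm. rewrite (ha y w) ?(@mulNl' _ _ _ hb) ?(@mulNr' _ _ _ hb) ?opprK. by [].
have hh29 : (mul (mul (mul z y) (alpha x)) (alpha (alpha w))) = (- (mul (mul (mul y z) (alpha x)) (alpha (alpha w)))).
  rewrite ?hm. rewrite (ha z y) ?(@mulNl' _ _ _ hb) ?(@mulNr' _ _ _ hb) ?opprK. by [].
have hh30 : (mul (mul (mul x w) (alpha z)) (alpha (alpha y))) = (- (mul (mul (mul w x) (alpha z)) (alpha (alpha y)))).
  rewrite ?hm. rewrite (ha x w) ?(@mulNl' _ _ _ hb) ?(@mulNr' _ _ _ hb) ?opprK. by [].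
have hh31 : (mul (mul (mul y x) (alpha z)) (alpha (alpha w))) = (- (mul (mul (mul x y) (alpha z)) (alpha (alpha w)))).
  rewrite ?hm. rewrite (ha y x) ?(@mulNl' _ _ _ hb) ?(@mulNr' _ _ _ hb) ?opprK. by [].
have hh32 : (mul (mul (mul y w) (alpha z)) (alpha (alpha x))) = (- (mul (mul (mul w y) (alpha z)) (alpha (alpha x)))).
  rewrite ?hm. rewrite (ha y w) ?(@mulNl' _ _ _ hb) ?(@mulNr' _ _ _ hb) ?opprK. by [].
have hh33 : (mul (alpha (alpha x)) (mul (mul w y) (alpha z))) = (- (mul (mul (mul w y) (alpha z)) (alpha (alpha x)))).
  rewrite ?hm. rewrite (ha (alpha (alpha x)) (mul (mul w y) (alpha z))) ?(@mulNl' _ _ _ hb) ?(@mulNr' _ _ _ hb) ?opprK. by [].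
have hh34 : (mul (alpha (alpha x)) (mul (mul y z) (alpha w))) = (- (mul (mul (mul y z) (alpha w)) (alpha (alpha x)))).
  rewrite ?hm. rewrite (ha (alpha (alpha x)) (mul (mul y z) (alpha w))) ?(@mulNl' _ _ _ hb) ?(@mulNr' _ _ _ hb) ?opprK. by [].
have hh35 : (mul (alpha (alpha x)) (mul (mul z w) (alpha y))) = (mul (mul (mul w z) (alpha y)) (alpha (alpha x))).
  rewrite ?hm. rewrite (ha z w) ?(@mulNl' _ _ _ hb) ?(@mulNr' _ _ _ hb) ?opprK. rewrite (ha (alpha (alpha x)) (mul (mul w z) (alpha y))) ?(@mulNl' _ _ _ hb) ?(@mulNr' _ _ _ hb) ?opprK. by [].
have hh36 : (mul (alpha (alpha w)) (mul (mul x y) (alpha z))) = (- (mul (mul (mul x y) (alpha z)) (alpha (alpha w)))).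
  rewrite ?hm. rewrite (ha (alpha (alpha w)) (mul (mul x y) (alpha z))) ?(@mulNl' _ _ _ hb) ?(@mulNr' _ _ _ hb) ?opprK. by [].
have hh37 : (mul (alpha (alpha w)) (mul (mul y z) (alpha x))) = (- (mul (mul (mul y z) (alpha x)) (alpha (alpha w)))).
  rewrite ?hm. rewrite (ha (alpha (alpha w)) (mul (mul y z) (alpha x))) ?(@mulNl' _ _ _ hb) ?(@mulNr' _ _ _ hb) ?opprK. by [].
have hh38 : (mul (alpha (alpha w)) (mul (mul z x) (alpha y))) = (mul (mul (mul x z) (alpha y)) (alpha (alpha w))).
  rewrite ?hm. rewrite (ha z x) ?(@mulNl' _ _ _ hb) ?(@mulNr' _ _ _ hb) ?opprK. rewrite (ha (alpha (alpha w)) (mul (mul x z) (alpha y))) ?(@mulNl' _ _ _ hb) ?(@mulNr' _ _ _ hb) ?opprK. by [].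
have hh39 : (mul (alpha (alpha y)) (mul (mul z w) (alpha x))) = (mul (mul (mul w z) (alpha x)) (alpha (alpha y))).
  rewrite ?hm. rewrite (ha z w) ?(@mulNl' _ _ _ hb) ?(@mulNr' _ _ _ hb) ?opprK. rewrite (ha (alpha (alpha y)) (mul (mul w z) (alpha x))) ?(@mulNl' _ _ _ hb) ?(@mulNr' _ _ _ hb) ?opprK. by [].
have hh40 : (mul (alpha (alpha y)) (mul (mul w x) (alpha z))) = (- (mul (mul (mul w x) (alpha z)) (alpha (alpha y)))).
  rewrite ?hm. rewrite (ha (alpha (alpha y)) (mul (mul w x) (alpha z))) ?(@mulNl' _ _ _ hb) ?(@mulNr' _ _ _ hb) ?opprK. by [].
have hh41 : (mul (alpha (alpha y)) (mul (mul x z) (alpha w))) = (- (mul (mul (mul x z) (alpha w)) (alpha (alpha y)))).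
  rewrite ?hm. rewrite (ha (alpha (alpha y)) (mul (mul x z) (alpha w))) ?(@mulNl' _ _ _ hb) ?(@mulNr' _ _ _ hb) ?opprK. by [].
have hh42 : (mul (alpha (alpha z)) (mul (mul w x) (alpha y))) = (- (mul (mul (mul w x) (alpha y)) (alpha (alpha z)))).
  rewrite ?hm. rewrite (ha (alpha (alpha z)) (mul (mul w x) (alpha y))) ?(@mulNl' _ _ _ hb) ?(@mulNr' _ _ _ hb) ?opprK. by [].
have hh43 : (mul (alpha (alpha z)) (mul (mul x y) (alpha w))) = (- (mul (mul (mul x y) (alpha w)) (alpha (alpha z)))).
  rewrite ?hm. rewrite (ha (alpha (alpha z)) (mul (mul x y) (alpha w))) ?(@mulNl' _ _ _ hb) ?(@mulNr' _ _ _ hb) ?opprK. by [].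
have hh44 : (mul (alpha (alpha z)) (mul (mul y w) (alpha x))) = (mul (mul (mul w y) (alpha x)) (alpha (alpha z))).
  rewrite ?hm. rewrite (ha y w) ?(@mulNl' _ _ _ hb) ?(@mulNr' _ _ _ hb) ?opprK. rewrite (ha (alpha (alpha z)) (mul (mul w y) (alpha x))) ?(@mulNl' _ _ _ hb) ?(@mulNr' _ _ _ hb) ?opprK. by [].
refine (@certify _ [:: (mul (mul (mul w x) (alpha y)) (alpha (alpha z))); (mul (mul (alpha y) (alpha z)) (alpha (mul w x))); (mul (mul (alpha z) (mul w x)) (alpha (alpha y))); (mul (alpha (alpha x)) (homJ mul alpha w y z)); (mul (homJ mul alpha x y z) (alpha (alpha w))); (mul (alpha (alpha w)) (homJ mul alpha x y z)); (mul (alpha (alpha y)) (homJ mul alpha z w x)); (mul (alpha (alpha z)) (homJ mul alpha w x y)); (mul (mul (mul y z) (alpha w)) (alpha (alpha x))); (mul (mul (alpha w) (alpha x)) (alpha (mul y z))); (mul (mul (alpha x) (mul y z)) (alpha (alpha w))); (mul (mul (alpha w) (alpha z)) (alpha (mul x y))); (mul (mul (alpha z) (mul x y)) (alpha (alpha w))); (mul (mul (mul x y) (alpha w)) (alpha (alpha z))); (mul (mul (alpha x) (alpha z)) (alpha (mul w y))); (mul (mul (alpha z) (mul w y)) (alpha (alpha x))); (mul (mul (mul w y) (alpha x)) (alpha (alpha z))); (mul (homJ mul alpha w z y) (alpha (alpha x))); (mul (homJ mul alpha x z y) (alpha (alpha w))); (mul (mul (alpha w) (alpha z)) (alpha (mul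 y x))); (mul (mul (alpha z) (mul y x)) (alpha (alpha w))); (mul (mul (mul y x) (alpha w)) (alpha (alpha z))); (mul (homJ mul alpha w z x) (alpha (alpha y))); (mul (homJ mul alpha y z x) (alpha (alpha w))); (mul (mul (alpha w) (alpha x)) (alpha (mul z y))); (mul (mul (alpha x) (mul z y)) (alpha (alpha w))); (mul (mul (mul z y) (alpha w)) (alpha (alpha x))); (mul (mul (alpha z) (alpha x)) (alpha (mul w y))); (mul (mul (alpha x) (mul w y)) (alpha (alpha z))); (mul (mul (mul w y) (alpha z)) (alpha (alpha x))); (mul (homJ mul alpha w x y) (alpha (alpha z))); (mul (homJ mul alpha z x y) (alpha (alpha w))); (mul (alpha (alpha x)) (mul (mul w y) (alpha z))); (mul (alpha (alpha x)) (mul (mul y z) (alpha w))); (mul (alpha (alpha x)) (mul (mul z w) (alpha y))); (mul (mul (mul x y) (alpha z)) (alpha (alpha w))); (mul (mul (mul y z) (alpha x)) (alpha (alpha w))); (mul (mul (mul z x) (alpha y)) (alpha (alpha w))); (mul (alpha (alpha w)) (mul (mul x y) (alpha z))); (mul (alpha (alpha w)) (mul (mul y z) (alpha x))); (mul (alpha (alpha w)) (mul (mul z x) (alpha y))); (mul (alpha (alpha y)) (mul (mul z w) (alpha x))); (mul (alpha (alpha y)) (mul (mul w x) (alpha z))); (mul (alpha (alpha y)) (mul (mul x z) (alpha w))); (mul (alpha (alpha z)) (mul (mul w x) (alpha y))); (mul (alpha (alpha z)) (mul (mul x y) (alpha w))); (mul (alpha (alpha z)) (mul (mul y w) (alpha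 x))); (mul (mul (mul w z) (alpha y)) (alpha (alpha x))); (mul (mul (mul y w) (alpha z)) (alpha (alpha x))); (mul (mul (mul x z) (alpha y)) (alpha (alpha w))); (mul (mul (mul z y) (alpha x)) (alpha (alpha w))); (mul (mul (mul y x) (alpha z)) (alpha (alpha w))); (mul (mul (mul w z) (alpha x)) (alpha (alpha y))); (mul (mul (mul z x) (alpha w)) (alpha (alpha y))); (mul (mul (mul x w) (alpha z)) (alpha (alpha y))); (mul (mul (mul y w) (alpha x)) (alpha (alpha z))); (mul (mul (alpha w) (alpha x)) (mul (alpha y) (alpha z))); (mul (mul (alpha w) (alpha z)) (mul (alpha x) (alpha y))); (mul (mul (alpha w) (alpha y)) (mul (alpha x) (alpha z))); (mul (mul (mul x z) (alpha w)) (alpha (alpha y))); (mul (mul (mul w x) (alpha z)) (alpha (alpha y)))] (Add (Add (Add (Add (Add (Mz (Posz 2) (Add (Add (Add (Add (At 0) (At 1)) (At 2)) (Opp (At 3))) (Opp (At 4)))) (Opp (At 5))) (At 3)) (Opp (At 6))) (At 7)) (Opp (Add (Add (Add (At 0) (At 1)) (At 2)) (Add (Add (At 8) (At 9)) (At 10))))) [:: (Posz 1); (Posz 1); (Posz 1); (Negz 0); (Negz 1); (Negz 0); (Negz 0); (Posz 1); (Posz 1); (Posz 1); (Posz 1); (Posz 1); (Posz 1); (Posz 1); (Negz 0); (Negz 0); (Negz 0); (Negz 0); (Negz 0); (Negz 0); (Negz 0); (Negz 0); (Negz 0); (Negz 0); (Negz 0); (Negz 0); (Negz 0); (Posz 1);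 (Posz 1); (Posz 1); (Posz 1); (Posz 1); (Posz 1); (Negz 0); (Negz 0); (Negz 0); (Negz 0); (Negz 0); (Negz 0); (Negz 0); (Negz 0); (Negz 0); (Posz 1); (Posz 1); (Posz 1)] [:: ((Add (Add (Add (At 11) (At 12)) (At 13)) (Add (Add (At 14) (At 15)) (At 16))), (Add (At 17) (At 18))); ((Add (Add (Add (At 19) (At 20)) (At 21)) (Add (Add (At 1) (At 2)) (At 0))), (Add (At 22) (At 23))); ((Add (Add (Add (At 24) (At 25)) (At 26)) (Add (Add (At 27) (At 28)) (At 29))), (Add (At 30) (At 31))); ((At 3), (Add (Add (At 32) (At 33)) (At 34))); ((At 4), (Add (Add (At 35) (At 36)) (At 37))); ((At 5), (Add (Add (At 38) (At 39)) (At 40))); ((At 6), (Add (Add (At 41) (At 42)) (At 43))); ((At 7), (Add (Add (At 44) (At 45)) (At 46))); ((At 17), (Add (Add (At 47) (At 26)) (At 48))); ((At 18), (Add (Add (At 49) (At 50)) (At 51))); ((At 22), (Add (Add (At 52) (At 53)) (At 54))); ((At 23), (Add (Add (At 36) (At 37)) (At 35))); ((At 30), (Add (Add (At 0) (At 13)) (At 55))); ((At 31), (Add (Add (At 37) (At 35)) (At 36))); ((At 9), (At 56)); ((At 10), (Opp (At 36))); ((At 11), (At 57)); ((At 12), (Opp (At 35))); ((At 14), (Opp (At 58))); ((At 15), (Opp (At 29))); ((At 19), (Opp (At 57))); ((At 20), (At 35)); ((At 21), (Opp (At 13))); ((At 24), (Opp (At 56))); ((At 25), (At 36)); ((At 27),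 (At 58)); ((At 28), (Opp (At 16))); ((At 53), (Opp (At 59))); ((At 55), (Opp (At 16))); ((At 50), (Opp (At 36))); ((At 54), (Opp (At 60))); ((At 51), (Opp (At 35))); ((At 48), (Opp (At 29))); ((At 32), (Opp (At 29))); ((At 33), (Opp (At 8))); ((At 34), (At 47)); ((At 38), (Opp (At 35))); ((At 39), (Opp (At 36))); ((At 40), (At 49)); ((At 41), (At 52)); ((At 42), (Opp (At 60))); ((At 43), (Opp (At 59))); ((At 44), (Opp (At 0))); ((At 45), (Opp (At 13))); ((At 46), (At 16))] (conj hh0 (conj hh1 (conj hh2 (conj hh3 (conj hh4 (conj hh5 (conj hh6 (conj hh7 (conj hh8 (conj hh9 (conj hh10 (conj hh11 (conj hh12 (conj hh13 (conj hh14 (conj hh15 (conj hh16 (conj hh17 (conj hh18 (conj hh19 (conj hh20 (conj hh21 (conj hh22 (conj hh23 (conj hh24 (conj hh25 (conj hh26 (conj hh27 (conj hh28 (conj hh29 (conj hh30 (conj hh31 (conj hh32 (conj hh33 (conj hh34 (conj hh35 (conj hh36 (conj hh37 (conj hh38 (conj hh39 (conj hh40 (conj hh41 (conj hh42 (conj hh43 (conj hh44 I))))))))))))))))))))))))))))))))))))))))))))) _).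
vm_compute; reflexivity.
Qed.
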